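(* Let $i\in\mathbb N$. Every geodesic word in $G'$ (over the generators $a_0^{\pm1},a_1^{\pm1},\dots$) representing an element of the cyclic subgroup $\langle a_i\rangle$ uses only letters $a_j^{\pm1}$ with $j\ge i$.
   Context: Fix an integer $p\ge20$. $G'=\langle a_0,a_1,a_2,\dots\mid a_j^{-1}a_{j-1}a_j=a_{j-1}^p\ (j\ge1)\rangle$, with word metric relative to the generating set $\{a_0,a_1,\dots\}$. A word is geodesic if its length equals the word length of the element it represents. *)

(* Defs.v *)
From mathcomp Require Import all_boot.
Set Implicit Arguments. Unset Strict Implicit. Unset Printing Implicit Defensive.

(* A letter a_j^{+1} is (j, true), a_j^{-1} is (j, false). *)
Definition letter := (nat * bool)%type.
Definition word := seq letter.

Definition inv_letter (x : letter) : letter := (x.1, ~~ x.2).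

(* Relator for j >= 1 : a_j^{-1} a_{j-1} a_j a_{j-1}^{-p}  (i.e. a_j^{-1} a_{j-1} a_j = a_{j-1}^p). *)
Definition relator (p j : nat) : word :=
  [:: (j.+1, false); (j, true); (j.+1, true)] ++ nseq p (j, false).

(* Two words represent the same element of
   G' = < a_0, a_1, ... | a_j^{-1} a_{j-1} a_j = a_{j-1}^p (j >= 1) >:
   the smallest equivalence relation on words containing free cancellation
   and deletion of relators inside a word. *)
Inductive weq (p : nat) : word -> word -> Prop :=
| weq_refl w : weq p w w
| weq_sym u v : weq p u v -> weq p v u
| weq_trans u v w : weq p u v -> weq p v w -> weq p u w
| weq_free u v x : weq p (u ++ x :: inv_letter x :: v) (u ++ v)
| weq_rel u v j : weq p (u ++ relator p j ++ v) (u ++ v).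

Definition geodesic (p : nat) (w : word) : Prop :=
  forall w' : word, weq p w w' -> size w <= size w'.

Definition in_cyclic (p i : nat) (w : word) : Prop :=
  exists (n : nat) (b : bool), weq p w (nseq n (i, b)).

(* Main.v *)
Require Import Defs.
From mathcomp Require Import all_boot.

Lemma filt_weq (p i : nat) (u v : word) : weq p u v ->
  weq p (filter (fun x : letter => i <= x.1) u) (filter (fun x : letter => i <= x.1) v).
Proof.
elim=> {u v} [w|u v _ IH|u v w _ IH1 _ IH2|u v x|u v j].
- exact: weq_refl.
- exact: weq_sym.
- exact: weq_trans IH1 IH2.
- rewrite !filter_cat /=.
  case: ifP => H; last first.
    rewrite /inv_letter /= H; exact: weq_refl.
  rewrite /inv_letter /= H.
  exact: (weq_free p (filter (fun x : letter => i <= x.1) u) (filter (fun x : letter => i <= x.1) v) x).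
- rewrite !filter_cat filter_nseq /=.
  case: (leqP i j) => H.
    rewrite (leq_trans H (leqnSn j)) mul1n /=.
    have := weq_rel p (filter (fun x : letter => i <= x.1) u)
                      (filter (fun x : letter => i <= x.1) v) j.
    by rewrite /relator.
  + rewrite mul0n /= cats0.
    case: ifP => H2.
    * have := weq_free p (filter (fun x : letter => i <= x.1) u)
                         (filter (fun x : letter => i <= x.1) v) (j.+1, false).
      by rewrite /inv_letter /= H2.
    * by rewrite H2; exact: weq_refl.
Qed.

Theorem lemma5p2 (p : nat) (hp : 20 <= p) (i : nat) (w : word) :
  geodesic p w -> in_cyclic p i w -> all (fun x : letter => i <= x.1) w.
Proof.
move=> G [n [b Hw]].
have H1 := @filt_weq p i _ _ Hw.
have E : filter (fun x : letter => i <= x.1) (nseq n (i, b)) = nseq n (i, b).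
  by apply/all_filterP; rewrite all_nseq /= leqnn orbT.
rewrite E in H1.
have H2 : weq p w (filter (fun x : letter => i <= x.1) w).
  exact: weq_trans Hw (weq_sym H1).
have := G _ H2.
rewrite size_filter all_count eqn_leq count_size /= => ->.
done.
Qed.
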